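(* Let $\Gamma$ be a nontrivial standard graph, let $f$ be a Morse eigenfunction of $\Gamma$ with eigenvalue $k$ (i.e. $-f''=k^2f$ on every edge, with Neumann vertex conditions), and let $\Omega$ be a Neumann domain of $f$, regarded as a metric graph with Neumann vertex conditions at all of its vertices. Then $f|_\Omega$ is an eigenfunction of the standard graph $\Omega$ corresponding to the eigenvalue $k$.
   Context: A metric graph is a finite connected graph $\Gamma=(\mathcal{V},\mathcal{E})$ (loops allowed) in which each edge $e$ is identified with an interval $[0,L_e]$, $L_e>0$. The Laplacian acts as $f|_e\mapsto -\frac{d^2}{dx_e^2}f|_e$ on functions in $\bigoplus_e H^2([0,L_e])$ satisfying Neumann vertex conditions at every vertex $v$: $f$ is continuous at $v$ and the sum of outgoing derivatives of $f$ at $v$ over incident edges is zero. Such a graph is standard; it is assumed to have no vertices of degree two, and it is nontrivial if it is not a single loop. The eigenvalues are written as $k^2$ with $k\ge0$, and $k$ is also called the eigenvalue. An eigenfunction $f$ is Morse if on each edge no interior point has both $f'$ and $f''$ vanishing. For a Morse eigenfunction, a Neumann point is a point of $\Gamma$ which is a local extremum (maximum or minimum) of $f$ and is not a vertex of degree one. A Neumann domain of $f$ is the closure of a connected component of $\Gamma$ minus the set of Neumann points, the closure being done by adding a vertex of degree one at each open endpoint of the component; its vertices are the vertices of $\Gamma$ it contains together with these added endpoints. *)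

(* Defs.v *)
From HB Require Import structures.
From mathcomp Require Import all_boot all_order all_algebra.
From mathcomp Require Import all_classical all_reals all_analysis.
From Stdlib Require Import Relations.

Set Implicit Arguments.
Unset Strict Implicit.
Unset Printing Implicit Defensive.

Import Order.TTheory GRing.Theory Num.Theory.
Local Open Scope ring_scope.

(* A metric graph: finite vertex set, finite edge set (loops and multiple
   edges allowed), each edge e identified with [0, mlen e], oriented from
   msrc e (x = 0) to mtgt e (x = mlen e). *)
Record mgraph (R : realType) := MGraph {
  mV : finType;
  mE : finType;
  msrc : mE -> mV;
  mtgt : mE -> mV;
  mlen : mE -> R;
  mlen_pos : forall e, 0 < mlen e }.

Arguments msrc {R G} e : rename.
Arguments mtgt {R G} e : rename.
Arguments mlen {R G} e : rename.

(* degree of a vertex (a loop counts twice) *)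
Definition deg (R : realType) (G : mgraph R) (v : mV G) : nat :=
  #|[pred e | msrc e == v]| + #|[pred e | mtgt e == v]|.

Definition adj (R : realType) (G : mgraph R) (v w : mV G) : Prop :=
  exists e, msrc e = v /\ mtgt e = w.

Definition graph_connected (R : realType) (G : mgraph R) : Prop :=
  forall v w : mV G, clos_refl_sym_trans _ (@adj R G) v w.

Definition standard (R : realType) (G : mgraph R) : Prop :=
  forall v : mV G, deg v <> 2%N.

Definition nontrivial (R : realType) (G : mgraph R) : Prop :=
  ~ (#|mV G| = 1%N /\ #|mE G| = 1%N /\ exists e : mE G, msrc e = mtgt e).

(* A function on the graph: on each edge e, a real function whose restriction
   to [0, mlen e] is the value of the function on e. *)
Definition gfun (R : realType) (G : mgraph R) := mE G -> R -> R.

(* -f'' = k^2 f on every edge (the edge function is a C^2 solution of the ODE;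
   every H^2 solution on [0,L] extends uniquely to such a solution on R). *)
Definition edge_ode (R : realType) (G : mgraph R) (k : R) (f : gfun G) : Prop :=
  forall (e : mE G) (x : R),
    derivable (f e) x 1 /\ derivable (derive1 (f e)) x 1 /\
    derive1 (derive1 (f e)) x = - (k ^+ 2) * f e x.

Definition neumann_conditions (R : realType) (G : mgraph R) (f : gfun G) : Prop :=
  forall v : mV G,
    (forall e1 e2 : mE G,
        (msrc e1 = v -> msrc e2 = v -> f e1 0 = f e2 0) /\
        (msrc e1 = v -> mtgt e2 = v -> f e1 0 = f e2 (mlen e2)) /\
        (mtgt e1 = v -> mtgt e2 = v -> f e1 (mlen e1) = f e2 (mlen e2))) /\
    \sum_(e | msrc e == v) derive1 (f e) 0
      - \sum_(e | mtgt e == v) derive1 (f e) (mlen e) = 0.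

Definition nonzero_fun (R : realType) (G : mgraph R) (f : gfun G) : Prop :=
  exists (e : mE G) (x : R), 0 <= x <= mlen e /\ f e x != 0.

Definition eigenfunction (R : realType) (G : mgraph R) (k : R) (f : gfun G) : Prop :=
  [/\ edge_ode k f, neumann_conditions f & nonzero_fun f].

Definition morse (R : realType) (G : mgraph R) (f : gfun G) : Prop :=
  forall (e : mE G) (x : R), 0 < x < mlen e ->
    ~ (derive1 (f e) x = 0 /\ derive1 (derive1 (f e)) x = 0).

(* Points of a metric graph: vertices, and interior points of edges. *)
Inductive gpoint (R : realType) (G : mgraph R) : Type :=
  | PV of mV G
  | PE of mE G & R.

Arguments PV {R G} v.
Arguments PE {R G} e x.

Definition valid_point (R : realType) (G : mgraph R) (p : gpoint G) : Prop :=
  match p with PV _ => True | PE e x => 0 < x < mlen e end.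

Definition canon (R : realType) (G : mgraph R) (e : mE G) (x : R) : gpoint G :=
  if x == 0 then PV (msrc e) else if x == mlen e then PV (mtgt e) else PE e x.

Definition local_ext (R : realType) (G : mgraph R) (f : gfun G)
    (cmp : R -> R -> bool) (p : gpoint G) : Prop :=
  match p with
  | PE e x => exists2 eps : R, 0 < eps &
      forall y, 0 <= y <= mlen e -> `|y - x| < eps -> cmp (f e y) (f e x)
  | PV v => exists2 eps : R, 0 < eps &
      forall e : mE G,
        (msrc e = v -> forall y, 0 <= y <= mlen e -> y < eps -> cmp (f e y) (f e 0)) /\
        (mtgt e = v -> forall y, 0 <= y <= mlen e -> mlen e - y < eps ->
                         cmp (f e y) (f e (mlen e)))
  end.

Definition neumann_point (R : realType) (G : mgraph R) (f : gfun G) (p : gpoint G) : Prop :=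
  valid_point p /\
  (local_ext f (fun a b => a <= b) p \/ local_ext f (fun a b => b <= a) p) /\
  ~ (exists v, p = PV v /\ deg v = 1%N).

(* elementary connections inside G minus the Neumann points *)
Inductive nstep (R : realType) (G : mgraph R) (f : gfun G) : gpoint G -> gpoint G -> Prop :=
  | nstep_edge e x y :
      0 < x < mlen e -> 0 < y < mlen e ->
      (forall z, Num.min x y <= z <= Num.max x y -> ~ neumann_point f (PE e z)) ->
      nstep f (PE e x) (PE e y)
  | nstep_src e y :
      0 < y < mlen e -> ~ neumann_point f (PV (msrc e)) ->
      (forall z, 0 < z <= y -> ~ neumann_point f (PE e z)) ->
      nstep f (PV (msrc e)) (PE e y)
  | nstep_tgt e y :
      0 < y < mlen e -> ~ neumann_point f (PV (mtgt e)) ->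
      (forall z, y <= z < mlen e -> ~ neumann_point f (PE e z)) ->
      nstep f (PV (mtgt e)) (PE e y).

Definition nconn (R : realType) (G : mgraph R) (f : gfun G) : gpoint G -> gpoint G -> Prop :=
  clos_refl_sym_trans _ (@nstep R G f).

Definition iota_pt (R : realType) (G O : mgraph R) (iE : mE O -> mE G)
    (off : mE O -> R) (iV : mV O -> gpoint G) (p : gpoint O) : gpoint G :=
  match p with
  | PV w => iV w
  | PE e' x => canon (iE e') (off e' + x)
  end.

(* (O, iE, off, iV) is (a realization of) a Neumann domain of f on G:
   each edge e' of O is the segment [off e', off e' + mlen e'] of the edge
   iE e' of G; each vertex of O is either a vertex of G that is not a Neumann
   point, or an added endpoint of degree one sitting at a Neumann point; the
   map from O minus the added endpoints to G is injective and its image is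
   exactly one connected component of G minus the Neumann points. *)
Definition neumann_domain (R : realType) (G : mgraph R) (f : gfun G)
    (O : mgraph R) (iE : mE O -> mE G) (off : mE O -> R) (iV : mV O -> gpoint G) : Prop :=
  let iP := iota_pt iE off iV in
  [/\ (forall e', 0 <= off e' /\ off e' + mlen e' <= mlen (iE e')),
      (forall e', iV (msrc e') = canon (iE e') (off e') /\
                  iV (mtgt e') = canon (iE e') (off e' + mlen e')),
      (forall w : mV O, (exists v, iV w = PV v /\ ~ neumann_point f (PV v)) \/
                        (neumann_point f (iV w) /\ deg w = 1%N)),
      (forall p q : gpoint O, valid_point p -> valid_point q ->
          ~ neumann_point f (iP p) -> ~ neumann_point f (iP q) ->
          iP p = iP q -> p = q)
    & exists2 c : gpoint G, valid_point c /\ ~ neumann_point f c &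
        forall q : gpoint G,
          (valid_point q /\ ~ neumann_point f q /\ nconn f c q) <->
          (exists p : gpoint O, [/\ valid_point p, ~ neumann_point f (iP p) & iP p = q])].

(* Main.v *)
Require Import Defs.
From HB Require Import structures.
From mathcomp Require Import all_boot all_order all_algebra.
From mathcomp Require Import all_classical all_reals all_analysis.
From mathcomp Require Import ring lra.
Import Order.TTheory GRing.Theory Num.Theory.
Set Implicit Arguments.
Unset Strict Implicit.
Local Open Scope ring_scope.

Section An.
Variable R : realType.
Implicit Types (f : R -> R).

Lemma shift_quot f c x :
  (fun h : R => h^-1 *: (((fun y => f (c + y)) \o shift x) (h *: (1:R)) - f (c + x)))
  = (fun h : R => h^-1 *: ((f \o shift (c + x)) (h *: (1:R)) - f (c + x))).
Proof. apply/funext => h /=. rewrite addrCA. by []. Qed.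

Lemma derivable_sh f c x : derivable f (c + x) 1 -> derivable (fun y => f (c + y)) x 1.
Proof. by rewrite /derivable shift_quot. Qed.

Lemma derive_sh f c x : 'D_1 (fun y => f (c + y)) x = 'D_1 f (c + x).
Proof. by rewrite /derive shift_quot. Qed.

Lemma derive1_sh f c x : derive1 (fun y => f (c + y)) x = derive1 f (c + x).
Proof. by rewrite !derive1E derive_sh. Qed.


Lemma right_max f c r : derivable f c 1 -> 0 < r ->
  (forall h, 0 < h < r -> f (c + h) <= f c) -> 'D_1 f c <= 0.
Proof.
move=> dfc r0 cmax.
rewrite ['D_1 f c]cvg_at_rightE; last exact: dfc.
apply: limr_le.
  rewrite -(cvg_at_rightE (fun h : R => h^-1 *: ((f \o shift c) _ - f c))) //.
  apply: cvg_trans dfc; apply: cvg_app.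
  move=> A [e egt0 Ae]; exists e => // x xe xgt0; apply: Ae => //.
  exact/lt0r_neq0.
near=> h; apply: mulr_ge0_le0.
  by rewrite invr_ge0; apply: ltW; near: h; exists 1 => /=.
rewrite /= scaler1 [h + c]addrC subr_le0; apply: cmax; apply/andP; split.
  by near: h; exists 1 => /=.
near: h; exists r => //= h; rewrite /= distrC subr0 => /(le_lt_trans (ler_norm _)).
by [].
Unshelve. all: by end_near. Qed.

Lemma left_max f c r : derivable f c 1 -> 0 < r ->
  (forall h, 0 < h < r -> f (c - h) <= f c) -> 0 <= 'D_1 f c.
Proof.
move=> dfc r0 cmax.
rewrite ['D_1 f c]cvg_at_leftE; last exact: dfc.
apply: limr_ge.
  rewrite -(cvg_at_leftE (fun h => h^-1 *: ((f \o shift c) _ - f c))) //.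
  apply: cvg_trans dfc; apply: cvg_app.
  move=> A [e egt0 Ae]; exists e => // x xe xgt0; apply: Ae => //.
  exact/ltr0_neq0.
near=> h; apply: mulr_le0.
  by rewrite invr_le0; apply: ltW; near: h; exists 1 => /=.
rewrite /= scaler1 [h + c]addrC -[h]opprK.
rewrite subr_le0.
apply: cmax; apply/andP; split.
  by rewrite oppr_gt0; near: h; exists 1 => /=.
near: h; exists r => //= h; rewrite /= distrC subr0 => + _.
move=> hr; apply: le_lt_trans hr; rewrite -normrN; exact: ler_norm.
Unshelve. all: by end_near. Qed.


Lemma right_min f c r : derivable f c 1 -> 0 < r ->
  (forall h, 0 < h < r -> f c <= f (c + h)) -> 0 <= 'D_1 f c.
Proof.
move=> dfc r0 cmin.
have := @right_max (- f) c r (derivableN dfc) r0.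
rewrite deriveN // oppr_le0; apply => h hr /=; rewrite lerN2; exact: cmin.
Qed.

Lemma left_min f c r : derivable f c 1 -> 0 < r ->
  (forall h, 0 < h < r -> f c <= f (c - h)) -> 'D_1 f c <= 0.
Proof.
move=> dfc r0 cmin.
have := @left_max (- f) c r (derivableN dfc) r0.
rewrite deriveN // oppr_ge0; apply => h hr /=; rewrite lerN2; exact: cmin.
Qed.

Definition ode_hyp (k : R) (g : R -> R) := forall x,
  derivable g x 1 /\ derivable (derive1 g) x 1 /\
  derive1 (derive1 g) x = - (k ^+ 2) * g x.

Lemma energy_deriv k g (x : R) : ode_hyp k g ->
  is_derive x 1 (fun y => derive1 g y ^+ 2 + k ^+ 2 * g y ^+ 2) 0.
Proof.
move=> H.
have [d1 [d2 e2]] := H x.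
have i1 : is_derive x 1 g (derive1 g x) by rewrite derive1E; exact: derivableP.
have i2 : is_derive x 1 (derive1 g) (- (k ^+ 2) * g x) by rewrite -e2 derive1E; exact: derivableP.
have i3 := is_deriveX 2 i2.
have i4 := is_deriveX 2 i1.
have i5 := is_deriveZ (k ^+ 2) i4.
have i6 := is_deriveD i3 i5.
have -> : (fun y => derive1 g y ^+ 2 + k ^+ 2 * g y ^+ 2) = (derive1 g ^+ 2 + k ^+ 2 \*: g ^+ 2).
  by apply/funext => y /=; rewrite /GRing.scale /= !expr2.
apply: (is_derive_eq i6).
rewrite /GRing.scale /= expr1. ring.
Qed.


Lemma deriv_cont (h : R -> R) : (forall x, derivable h x 1) -> continuous (h : R^o -> R^o).
Proof.
move=> dh x; apply: differentiable_continuous; exact/derivable1_diffP.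
Qed.

Definition energy (k : R) (g : R -> R) := fun y : R => derive1 g y ^+ 2 + k ^+ 2 * g y ^+ 2.

Lemma energy_const k g x y : ode_hyp k g -> energy k g x = energy k g y.
Proof.
move=> H.
have dE (z : R) : is_derive z 1 (energy k g) 0 by exact: energy_deriv.
have cE : continuous (energy k g : R^o -> R^o).
  by apply: deriv_cont => z; have := dE z; case.
wlog xy : x y / x < y.
  move=> W; case: (ltgtP x y) => [xy|yx|->] //; first exact: W.
  by symmetry; apply: W.
have [c _ ] := @MVT R (energy k g) (fun _ => 0) x y xy (fun z _ => dE z)
  (continuous_subspaceT cE).
by rewrite mul0r => /eqP; rewrite subr_eq0 => /eqP.
Qed.


Lemma near_nz (h : R -> R) a : derivable h a 1 -> h a != 0 ->
  exists2 d, 0 < d & forall t, `|t - a| < d -> h t != 0.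
Proof.
move=> dh ha.
have ch : {for a, continuous (h : R^o -> R^o)}.
  apply: differentiable_continuous; exact/derivable1_diffP.
have := proj1 (cvgrPdist_lt _ _) ch `|h a|; rewrite normr_gt0 => /(_ _ ha).
move=> /nbhs_ballP [e e0 He]; exists e => // t ht.
have : ball a e t by rewrite /ball /= distrC.
move=> /He /=; apply: contraTneq => ->; by rewrite subr0 ltxx.
Qed.


Lemma crit_isolated k g L a : ode_hyp k g -> 0 < L ->
  (forall x, 0 < x < L -> ~ (derive1 g x = 0 /\ derive1 (derive1 g) x = 0)) ->
  exists2 d, 0 < d & forall z, 0 < `|z - a| < d -> derive1 g z != 0.
Proof.
move=> H L0 Hm.
have [dga [d2a e2a]] := H a.
case: (eqVneq (derive1 g a) 0) => ga; last first.
  have [d d0 Hd] := near_nz d2a ga.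
  by exists d => // z /andP[_ /Hd].
case: (eqVneq (k ^+ 2 * g a) 0) => kg.
  exfalso.
  have Ea : energy k g a = 0.
    by rewrite /energy ga expr2 mulrA kg; ring.
  have := energy_const (L / 2) a H; rewrite Ea /energy => E0.
  have [_ [_ e2m]] := H (L / 2).
  apply: (Hm (L / 2)).
    apply/andP; split; lra.
  have s0 : 0 <= derive1 g (L / 2) ^+ 2 by exact: sqr_ge0.
  have t0 : 0 <= (k * g (L / 2)) ^+ 2 by exact: sqr_ge0.
  have E1 : derive1 g (L / 2) ^+ 2 + (k * g (L / 2)) ^+ 2 = 0.
    by rewrite -E0 exprMn.
  move/eqP: E1; rewrite paddr_eq0 // !sqrf_eq0 => /andP[/eqP -> /eqP kg0].
  split => //; rewrite e2m expr2 -mulNr -mulrA kg0 mulr0 //.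
have gan : g a != 0 by apply: contraNneq kg => ->; rewrite mulr0.
have kn : k ^+ 2 != 0 by apply: contraNneq kg => ->; rewrite mul0r.
have [d d0 Hd] := near_nz dga gan.
exists d => // z /andP[za zd]; apply/eqP => gz.
have cg' : continuous (derive1 g : R^o -> R^o).
  by apply: deriv_cont => y; have [_ []] := H y.
have Rol lo hi : lo < hi -> derive1 g lo = derive1 g hi ->
    exists2 c, c \in `]lo, hi[ & derive1 (derive1 g) c = 0.
  move=> lh e; have [c cI dc] := Rolle lh (fun y _ => proj1 (proj2 (H y)))
     (continuous_subspaceT cg') e.
  by exists c => //; rewrite derive1E; apply: derive_val.
have key c : `|c - a| < d -> derive1 (derive1 g) c != 0.
  move=> /Hd gc; have [_ [_ ->]] := H c; rewrite mulf_neq0 // oppr_eq0 //.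
case: (ltgtP z a) => [za'|az|eza].
- have e : derive1 g z = derive1 g a by rewrite gz ga.
  have [c cI /eqP] := Rol z a za' e.
  apply/negP; apply: key; move: cI; rewrite in_itv /= => /andP[h1 h2].
  move: zd; rewrite ltr0_norm ?subr_lt0 // => h3.
  rewrite ltr0_norm ?subr_lt0 //; lra.
- have e : derive1 g a = derive1 g z by rewrite gz ga.
  have [c cI /eqP] := Rol a z az e.
  apply/negP; apply: key; move: cI; rewrite in_itv /= => /andP[h1 h2].
  move: zd; rewrite gtr0_norm ?subr_gt0 // => h3.
  rewrite gtr0_norm ?subr_gt0 //; lra.
- by move: za; rewrite eza subrr normr0 ltxx.
Qed.


Lemma kirch_signs (T : finType) (P Q : pred T) (D0 DL : T -> R) :
  (forall e, P e -> D0 e <= 0) -> (forall e, Q e -> 0 <= DL e) ->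
  \sum_(e | P e) D0 e - \sum_(e | Q e) DL e = 0 ->
  (forall e, P e -> D0 e = 0) /\ (forall e, Q e -> DL e = 0).
Proof.
move=> H0 HL /eqP; rewrite subr_eq0 => /eqP E.
have s0 : \sum_(e | P e) D0 e <= 0 by apply: sumr_le0.
have s1 : 0 <= \sum_(e | Q e) DL e by apply: sumr_ge0.
have z0 : \sum_(e | P e) D0 e = 0 by apply/eqP; rewrite eq_le s0 E s1.
have z1 : \sum_(e | Q e) DL e = 0 by rewrite -E.
split; last exact: psumr_eq0P z1.
move=> e Pe; apply/eqP; rewrite -oppr_eq0; apply/eqP; move: e Pe.
apply: psumr_eq0P; first by move=> e /H0; rewrite oppr_ge0.
by rewrite sumrN z0 oppr0.
Qed.

Lemma sum_bij (T U : finType) (P : pred T) (Q : pred U) (h : T -> U) (F : U -> R) :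
  {in P &, injective h} -> (forall t, P t -> Q (h t)) ->
  (forall u, Q u -> exists t, P t /\ h t = u) ->
  \sum_(t | P t) F (h t) = \sum_(u | Q u) F u.
Proof.
move=> inj PQ QP.
have := @big_imset _ 0 +%R T U h (mem P) F inj.
rewrite -[\sum_(t in P) _]/(\sum_(t | P t) F (h t)) => <-.
apply: eq_bigl => u; apply/imsetP/idP.
  by move=> [t Pt ->]; apply: PQ.
by move=> /QP [t [Pt <-]]; exists t.
Qed.

Lemma pos_min (T : finType) (F : T -> R) :
  exists2 m, 0 < m & forall t, 0 < F t -> m <= F t.
Proof.
exists (\big[Num.min/1]_(t | 0 < F t) F t).
  by apply: (big_ind (fun x => 0 < x)) => // x y x0 y0; rewrite lt_min x0.
move=> t Ft; rewrite (bigD1 t) //= ge_min lexx //.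
Qed.


Lemma min_props (a b : R) :
  [/\ Num.min a b <= a, Num.min a b <= b & (0 < a -> 0 < b -> 0 < Num.min a b)].
Proof.
split; first by rewrite ge_min lexx.
  by rewrite ge_min lexx orbT.
by move=> a0 b0; rewrite lt_min a0 b0.
Qed.

End An.

Unset Implicit Arguments.
Unset Strict Implicit.
From Stdlib Require Import Relations.
Section GSide.
Variables (R : realType) (G : mgraph R) (k : R) (f : gfun G).
Hypothesis Hode : edge_ode k f.
Hypothesis Hneu : neumann_conditions f.
Hypothesis Hmorse : morse f.

Lemma ode_e e : ode_hyp k (f e).
Proof. exact: Hode. Qed.

Lemma interior_nonN e z : 0 < z < mlen e -> derive1 (f e) z != 0 ->
  ~ neumann_point f (PE e z).
Proof.
move=> /andP[z0 zL] dz [_ [Hm _]].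
have Hd t : derivable (f e) t 1 by have [] := Hode e t.
have key : forall cmp : R -> R -> bool, local_ext f cmp (PE e z) ->
   exists2 r, 0 < r & forall t, t \in `]z - r, z + r[ -> cmp (f e t) (f e z).
  move=> cmp [eps e0 He].
  have [n1 n2 n3] := min_props z (mlen e - z).
  have [m1 m2 m3] := min_props eps (Num.min z (mlen e - z)).
  have n4 := n3 z0; have zL' : 0 < mlen e - z by lra.
  have n5 := n4 zL'; have m4 := m3 e0 n5.
  exists (Num.min eps (Num.min z (mlen e - z))) => // t.
  rewrite in_itv /= => /andP[h1 h2]; apply: He.
    apply/andP; split; lra.
  rewrite ltr_norml; apply/andP; split; lra.
case: Hm => /key [r r0 Hr].
  have := @derive1_at_max R (f e) (z - r) (z + r) z.
  move=> /(_ _ (fun t _ => Hd t) _ Hr) H.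
  apply/negP: dz; rewrite negbK derive1E; apply/eqP; apply: derive_val; apply: H.
    lra.
  rewrite in_itv /=; apply/andP; split; lra.
have := @derive1_at_min R (f e) (z - r) (z + r) z.
move=> /(_ _ (fun t _ => Hd t) _ Hr) H.
apply/negP: dz; rewrite negbK derive1E; apply/eqP; apply: derive_val; apply: H.
  lra.
rewrite in_itv /=; apply/andP; split; lra.
Qed.


Lemma nonN_near0 e : exists2 d, 0 < d &
  forall z, 0 < z < mlen e -> z < d -> ~ neumann_point f (PE e z).
Proof.
have [d d0 Hd] := @crit_isolated R k (f e) (mlen e) 0 (ode_e e) (mlen_pos e)
  (fun x hx => Hmorse e x hx).
exists d => // z hz zd; apply: interior_nonN => //; apply: Hd.
case/andP: hz => z0 _; rewrite subr0 gtr0_norm // z0 //.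
Qed.

Lemma nonN_nearL e : exists2 d, 0 < d &
  forall z, 0 < z < mlen e -> mlen e - z < d -> ~ neumann_point f (PE e z).
Proof.
have [d d0 Hd] := @crit_isolated R k (f e) (mlen e) (mlen e) (ode_e e) (mlen_pos e)
  (fun x hx => Hmorse e x hx).
exists d => // z hz zd; apply: interior_nonN => //; apply: Hd.
case/andP: hz => z0 zL; rewrite -normrN opprB gtr0_norm ?subr_gt0 // zL //.
Qed.

Lemma vertex_deriv v : neumann_point f (PV v) -> forall e,
  (msrc e = v -> derive1 (f e) 0 = 0) /\ (mtgt e = v -> derive1 (f e) (mlen e) = 0).
Proof.
move=> [_ [Hm _]].
have Hd e t : derivable (f e) t 1 by have [] := Hode e t.
have Kv := (Hneu v).2.
suff [H0 HL] : (forall e, msrc e == v -> derive1 (f e) 0 = 0) /\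
    (forall e, mtgt e == v -> derive1 (f e) (mlen e) = 0).
  by move=> e; split => /eqP; [apply: H0|apply: HL].
case: Hm => [[eps e0 He]|[eps e0 He]].
- apply: (@kirch_signs R _ (fun e => msrc e == v) (fun e => mtgt e == v)
     (fun e => derive1 (f e) 0) (fun e => derive1 (f e) (mlen e))).
  + move=> e /eqP se; rewrite derive1E.
    have [m1 m2 m3] := min_props eps (mlen e).
    have m4 := m3 e0 (mlen_pos e).
    apply: (right_max (Hd e 0) m4) => h /andP[h0 hr].
    rewrite add0r; apply: (proj1 (He e)) => //; first (apply/andP; split); lra.
  + move=> e /eqP se; rewrite derive1E.
    have [m1 m2 m3] := min_props eps (mlen e).
    have m4 := m3 e0 (mlen_pos e).
    apply: (left_max (Hd e _) m4) => h /andP[h0 hr].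
    apply: (proj2 (He e)) => //; first (apply/andP; split); lra.
  + exact: Kv.
- have X1 : forall e, msrc e == v -> - derive1 (f e) 0 <= 0.
    move=> e /eqP se; rewrite derive1E oppr_le0.
    have [m1 m2 m3] := min_props eps (mlen e).
    have m4 := m3 e0 (mlen_pos e).
    apply: (right_min (Hd e 0) m4) => h /andP[h0 hr].
    rewrite add0r; apply: (proj1 (He e)) => //; first (apply/andP; split); lra.
  have X2 : forall e, mtgt e == v -> 0 <= - derive1 (f e) (mlen e).
    move=> e /eqP se; rewrite derive1E oppr_ge0.
    have [m1 m2 m3] := min_props eps (mlen e).
    have m4 := m3 e0 (mlen_pos e).
    apply: (left_min (Hd e _) m4) => h /andP[h0 hr].
    apply: (proj2 (He e)) => //; first (apply/andP; split); lra.
  have X3 : \sum_(e | msrc e == v) - derive1 (f e) 0 -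
      \sum_(e | mtgt e == v) - derive1 (f e) (mlen e) = 0.
    by rewrite !sumrN -opprD Kv oppr0.
  have [H0 HL] := kirch_signs X1 X2 X3.
  split => e Pe.
    by apply/eqP; rewrite -oppr_eq0; apply/eqP; apply: H0.
  by apply/eqP; rewrite -oppr_eq0; apply/eqP; apply: HL.
Qed.


Lemma canon_val (e e2 : mE G) (x x2 : R) : Defs.canon e x = Defs.canon e2 x2 -> f e x = f e2 x2.
Proof.
rewrite /Defs.canon.
case: eqP => [->|x0]; [|case: eqP => [->|xL]];
  (case: eqP => [->|y0]; [|case: eqP => [->|yL]]) => //.
- by case=> E; have [H _] := (Hneu (msrc e)).1 e e2; apply: H.
- by case=> E; have [_ [H _]] := (Hneu (msrc e)).1 e e2; apply: H.
- by case=> E; have [_ [H _]] := (Hneu (msrc e2)).1 e2 e; symmetry; apply: H.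
- by case=> E; have [_ [_ H]] := (Hneu (mtgt e)).1 e e2; apply: H.
- by case=> -> ->.
Qed.

Lemma canon_deriv0 (e : mE G) (x : R) : 0 <= x <= mlen e -> neumann_point f (Defs.canon e x) ->
  derive1 (f e) x = 0.
Proof.
move=> /andP[x0 xL]; rewrite /Defs.canon.
case: eqP => [->|xn0]; first by move=> /vertex_deriv /(_ e) [+ _]; apply.
case: eqP => [->|xnL]; first by move=> /vertex_deriv /(_ e) [_ +]; apply.
move=> Hn; apply/eqP; apply: contraT => dz.
have hx : 0 < x < mlen e.
  by rewrite !lt_def; apply/andP; split; apply/andP; split => //; apply/eqP => // /esym.
by have := interior_nonN e x hx dz Hn.
Qed.


Lemma canon_PE (e e2 : mE G) (x y : R) : Defs.canon e x = PE e2 y -> e = e2 /\ x = y.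
Proof. by rewrite /Defs.canon; case: eqP => _ //; case: eqP => _ // [-> ->]. Qed.

Lemma canon_int (e : mE G) (y : R) : 0 < y < mlen e -> Defs.canon e y = PE e y.
Proof.
move=> /andP[y0 yL]; rewrite /Defs.canon.
by rewrite (gt_eqF y0) (lt_eqF yL).
Qed.

Lemma canon_0 (e : mE G) : Defs.canon e 0 = PV (msrc e).
Proof. by rewrite /Defs.canon eqxx. Qed.

Lemma canon_L (e : mE G) : Defs.canon e (mlen e) = PV (mtgt e).
Proof. by rewrite /Defs.canon (gt_eqF (mlen_pos e)) eqxx. Qed.

Lemma canon_PV_src (e : mE G) (x m : R) v : 0 <= x -> 0 < m -> x + m <= mlen e ->
  Defs.canon e x = PV v -> x = 0 /\ msrc e = v.
Proof.
move=> x0 m0 xm; rewrite /Defs.canon; case: eqP => [-> [] //|xn0].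
case: eqP => [xL _|//]; exfalso; lra.
Qed.

Lemma canon_PV_tgt (e : mE G) (x m : R) v : 0 <= x -> 0 < m -> x + m <= mlen e ->
  Defs.canon e (x + m) = PV v -> x + m = mlen e /\ mtgt e = v.
Proof.
move=> x0 m0 xm; rewrite /Defs.canon; case: eqP => [xm0|xn0]; first (exfalso; lra).
by case: eqP => [xL [] //|].
Qed.

Variables (O : mgraph R) (iE : mE O -> mE G) (off : mE O -> R) (iV : mV O -> gpoint G).
Hypothesis HND : neumann_domain f iE off iV.

Notation iP := (iota_pt iE off iV).

Lemma Hoff e' : 0 <= off e' /\ off e' + mlen e' <= mlen (iE e').
Proof. by case: HND. Qed.

Lemma HiV e' : iV (msrc e') = Defs.canon (iE e') (off e') /\
               iV (mtgt e') = Defs.canon (iE e') (off e' + mlen e').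
Proof. by case: HND. Qed.

Lemma Hw (w : mV O) : (exists v, iV w = PV v /\ ~ neumann_point f (PV v)) \/
                        (neumann_point f (iV w) /\ deg w = 1%N).
Proof. by case: HND. Qed.

Lemma Hinj (p q : gpoint O) : valid_point p -> valid_point q ->
          ~ neumann_point f (iP p) -> ~ neumann_point f (iP q) ->
          iP p = iP q -> p = q.
Proof. by case: HND => _ _ _ H _; apply: H. Qed.

Lemma Hcomp : exists2 c : gpoint G, valid_point c /\ ~ neumann_point f c &
        forall q : gpoint G,
          (valid_point q /\ ~ neumann_point f q /\ nconn f c q) <->
          (exists p : gpoint O, [/\ valid_point p, ~ neumann_point f (iP p) & iP p = q]).
Proof. by case: HND. Qed.


Lemma vert_conn (w : mV O) v c :
  iV w = PV v -> ~ neumann_point f (PV v) ->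
  (forall q : gpoint G,
          (valid_point q /\ ~ neumann_point f q /\ nconn f c q) <->
          (exists p : gpoint O, [/\ valid_point p, ~ neumann_point f (iP p) & iP p = q])) ->
  nconn f c (PV v).
Proof.
move=> Hwv Hn Hc.
have : exists p : gpoint O, [/\ valid_point p, ~ neumann_point f (iP p) & iP p = PV v].
  by exists (PV w); split => //=; rewrite Hwv.
by move=> /(proj2 (Hc (PV v))) [_ [_ ]].
Qed.

Lemma pt_edge c (e : mE G) y :
  (forall q : gpoint G,
          (valid_point q /\ ~ neumann_point f q /\ nconn f c q) <->
          (exists p : gpoint O, [/\ valid_point p, ~ neumann_point f (iP p) & iP p = q])) ->
  0 < y < mlen e -> ~ neumann_point f (PE e y) -> nconn f c (PE e y) ->
  exists e' x, [/\ 0 < x < mlen e', iE e' = e & off e' + x = y].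
Proof.
move=> Hc hy hn hcn.
have [p [pv pn pe]] := proj1 (Hc (PE e y)) (conj hy (conj hn hcn)).
case: p pv pn pe => [w'|e' x] /= pv pn pe.
  case: (Hw w') => [[v' [E _]]|[Hn _]]; first by rewrite E in pe.
  by case: pn.
have [E1 E2] := canon_PE _ _ _ _ pe.
by exists e', x.
Qed.

Lemma src_surj (w : mV O) v (e : mE G) :
  iV w = PV v -> ~ neumann_point f (PV v) -> msrc e = v ->
  exists e', [/\ msrc e' = w, iE e' = e & off e' = 0].
Proof.
move=> Hwv HnN Hse.
have [c [cv cn] Hc] := Hcomp.
have [m m0 Hm] := pos_min off.
have [d d0 Hd] := nonN_near0 e.
have [a1 a2 a3] := min_props d (mlen e).
have a4 := a3 d0 (mlen_pos e).
have [b1 b2 b3] := min_props (Num.min d (mlen e)) m.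
have b4 := b3 a4 m0.
set y := Num.min (Num.min d (mlen e)) m / 2.
have hy : 0 < y < mlen e by rewrite /y; apply/andP; split; lra.
have hyn : ~ neumann_point f (PE e y) by apply: Hd => //; rewrite /y; lra.
have c1 := vert_conn _ _ _ Hwv HnN Hc.
have c2 : nconn f (PV v) (PE e y).
  apply: rst_step; rewrite -Hse; apply: nstep_src => //; first by rewrite Hse.
  move=> z /andP[z0 zy]; apply: Hd; first (apply/andP; split); rewrite /y in zy *; lra.
have [e' [x [hx E1 E2]]] := pt_edge _ _ _ Hc hy hyn (rst_trans _ _ _ _ _ c1 c2).
have [of0 of1] := Hoff e'.
have oz : off e' = 0.
  case: (ltrP 0 (off e')) => [/Hm|] ?; rewrite /y in E2; case/andP: hx => ? ?; lra.
exists e'; split => //.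
have : PV (msrc e') = PV w.
  have hm : iV (msrc e') = PV v by rewrite (proj1 (HiV e')) oz E1 canon_0 Hse.
  by apply: Hinj => //=; rewrite ?hm ?Hwv.
by case.
Qed.


Lemma tgt_surj (w : mV O) v (e : mE G) :
  iV w = PV v -> ~ neumann_point f (PV v) -> mtgt e = v ->
  exists e', [/\ mtgt e' = w, iE e' = e & off e' + mlen e' = mlen e].
Proof.
move=> Hwv HnN Hse.
have [c [cv cn] Hc] := Hcomp.
have [m m0 Hm] := pos_min (fun e' => mlen (iE e') - (off e' + mlen e')).
have [d d0 Hd] := nonN_nearL e.
have [a1 a2 a3] := min_props d (mlen e).
have a4 := a3 d0 (mlen_pos e).
have [b1 b2 b3] := min_props (Num.min d (mlen e)) m.
have b4 := b3 a4 m0.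
set t := Num.min (Num.min d (mlen e)) m / 2.
set y := mlen e - t.
have hy : 0 < y < mlen e by rewrite /y /t; apply/andP; split; lra.
have hyn : ~ neumann_point f (PE e y) by apply: Hd => //; rewrite /y /t; lra.
have c1 := vert_conn _ _ _ Hwv HnN Hc.
have c2 : nconn f (PV v) (PE e y).
  apply: rst_step; rewrite -Hse; apply: nstep_tgt => //; first by rewrite Hse.
  move=> z /andP[zy zL]; apply: Hd; first (apply/andP; split);
    rewrite /y /t in zy *; lra.
have [e' [x [hx E1 E2]]] := pt_edge _ _ _ Hc hy hyn (rst_trans _ _ _ _ _ c1 c2).
have [of0 of1] := Hoff e'.
have oz : off e' + mlen e' = mlen e.
  move: (Hm e'); rewrite E1 => Hm'.
  case: (ltrP 0 (mlen e - (off e' + mlen e'))) => [/Hm'|] ?;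
    rewrite /y /t in E2; case/andP: hx => ? ?; rewrite E1 in of1; lra.
exists e'; split => //.
have : PV (mtgt e') = PV w.
  have hm : iV (mtgt e') = PV v by rewrite (proj2 (HiV e')) oz E1 canon_L Hse.
  by apply: Hinj => //=; rewrite ?hm ?Hwv.
by case.
Qed.


Lemma src_map (e' : mE O) w v : msrc e' = w -> iV w = PV v ->
  off e' = 0 /\ msrc (iE e') = v.
Proof.
move=> <- H; have [of0 of1] := Hoff e'.
apply: (canon_PV_src _ _ _ _ of0 (mlen_pos e') of1).
by rewrite -(proj1 (HiV e')).
Qed.

Lemma tgt_map (e' : mE O) w v : mtgt e' = w -> iV w = PV v ->
  off e' + mlen e' = mlen (iE e') /\ mtgt (iE e') = v.
Proof.
move=> <- H; have [of0 of1] := Hoff e'.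
apply: (canon_PV_tgt _ _ _ _ of0 (mlen_pos e') of1).
by rewrite -(proj2 (HiV e')).
Qed.

Lemma src_inj w v (e1 e2 : mE O) : iV w = PV v -> ~ neumann_point f (PV v) ->
  msrc e1 = w -> msrc e2 = w -> iE e1 = iE e2 -> e1 = e2.
Proof.
move=> Hwv HnN s1 s2 E.
have [z1 _] := src_map _ _ _ s1 Hwv.
have [z2 _] := src_map _ _ _ s2 Hwv.
have [_ l1] := Hoff e1; have [_ l2] := Hoff e2.
have [d d0 Hd] := nonN_near0 (iE e1).
have [a1 a2 a3] := min_props d (mlen e1).
have a4 := a3 d0 (mlen_pos e1).
have [b1 b2 b3] := min_props (Num.min d (mlen e1)) (mlen e2).
have b4 := b3 a4 (mlen_pos e2).
set y := Num.min (Num.min d (mlen e1)) (mlen e2) / 2.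
have hy : 0 < y < mlen (iE e1).
  by rewrite /y; apply/andP; split; rewrite z1 in l1; lra.
have p1 : iP (PE e1 y) = PE (iE e1) y by rewrite /= z1 add0r canon_int.
have p2 : iP (PE e2 y) = PE (iE e1) y by rewrite /= z2 add0r -E canon_int.
have hn : ~ neumann_point f (PE (iE e1) y) by apply: Hd => //; rewrite /y; lra.
have : PE e1 y = PE e2 y.
  apply: Hinj; rewrite ?p1 ?p2 //= /y; apply/andP; split; lra.
by case.
Qed.

Lemma tgt_inj w v (e1 e2 : mE O) : iV w = PV v -> ~ neumann_point f (PV v) ->
  mtgt e1 = w -> mtgt e2 = w -> iE e1 = iE e2 -> e1 = e2.
Proof.
move=> Hwv HnN s1 s2 E.
have [z1 _] := tgt_map _ _ _ s1 Hwv.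
have [z2 _] := tgt_map _ _ _ s2 Hwv.
have [of1 _] := Hoff e1; have [of2 _] := Hoff e2.
have [d d0 Hd] := nonN_nearL (iE e1).
have [a1 a2 a3] := min_props d (mlen e1).
have a4 := a3 d0 (mlen_pos e1).
have [b1 b2 b3] := min_props (Num.min d (mlen e1)) (mlen e2).
have b4 := b3 a4 (mlen_pos e2).
set y := Num.min (Num.min d (mlen e1)) (mlen e2) / 2.
have hy : 0 < mlen (iE e1) - y < mlen (iE e1).
  by rewrite /y; apply/andP; split; lra.
have p1 : iP (PE e1 (mlen e1 - y)) = PE (iE e1) (mlen (iE e1) - y).
  by rewrite /= addrA z1 canon_int.
have p2 : iP (PE e2 (mlen e2 - y)) = PE (iE e1) (mlen (iE e1) - y).
  by rewrite /= addrA z2 -E canon_int.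
have hn : ~ neumann_point f (PE (iE e1) (mlen (iE e1) - y)).
  by apply: Hd => //; rewrite /y; lra.
have : PE e1 (mlen e1 - y) = PE e2 (mlen e2 - y).
  apply: Hinj; rewrite ?p1 ?p2 //= /y; apply/andP; split; lra.
by case.
Qed.


Definition gO : gfun O := fun (e' : mE O) (x : R) => f (iE e') (off e' + x).

Lemma d1gO (e' : mE O) : derive1 (gO e') = fun y => derive1 (f (iE e')) (off e' + y).
Proof. by apply/funext => y; rewrite /gO derive1_sh. Qed.

Lemma ode_O : edge_ode k gO.
Proof.
move=> e' x; have [h1 [h2 h3]] := Hode (iE e') (off e' + x).
split; first exact: derivable_sh.
rewrite d1gO; split; first exact: (derivable_sh h2).
by rewrite derive1_sh h3.
Qed.

Lemma neu_O : neumann_conditions gO.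
Proof.
move=> w; split.
  move=> e1 e2; rewrite /gO.
  have [s1 t1] := HiV e1; have [s2 t2] := HiV e2.
  split; [|split] => H1 H2; rewrite ?addr0; apply: canon_val;
    rewrite -?s1 -?s2 -?t1 -?t2 H1 H2 //.
rewrite (eq_bigr (fun e' => derive1 (f (iE e')) (off e'))); last first.
  by move=> e' _; rewrite d1gO addr0.
rewrite [X in _ - X](eq_bigr (fun e' => derive1 (f (iE e')) (off e' + mlen e'))); last first.
  by move=> e' _; rewrite d1gO.
case: (Hw w) => [[v [Hwv HnN]]|[Hn _]]; last first.
  have B e' : 0 <= off e' <= mlen (iE e') /\ 0 <= off e' + mlen e' <= mlen (iE e').
    have [? ?] := Hoff e'; have := mlen_pos e'.
    by move=> ?; split; apply/andP; split; lra.
  rewrite big1 ?big1 ?subrr // => e' /eqP H; apply: canon_deriv0;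
    try (by apply: (proj1 (B e'))); try (by apply: (proj2 (B e'))).
    by rewrite -(proj2 (HiV e')) H.
  by rewrite -(proj1 (HiV e')) H.
rewrite (eq_bigr (fun e' => derive1 (f (iE e')) 0)); last first.
  by move=> e' /eqP H; have [-> _] := src_map _ _ _ H Hwv.
rewrite [X in _ - X](eq_bigr (fun e' => derive1 (f (iE e')) (mlen (iE e')))); last first.
  by move=> e' /eqP H; have [-> _] := tgt_map _ _ _ H Hwv.
have S1 : \sum_(e' | msrc e' == w) derive1 (f (iE e')) 0 =
          \sum_(e | msrc e == v) derive1 (f e) 0.
  apply: (@sum_bij R _ _ (fun e' => msrc e' == w) (fun e => msrc e == v) iE
     (fun e => derive1 (f e) 0)).
  - by move=> e1 e2 /eqP ? /eqP ?; apply: (src_inj _ _ _ _ Hwv HnN).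
  - by move=> e' /eqP H; have [_ ->] := src_map _ _ _ H Hwv.
  - by move=> e /eqP /(src_surj _ _ _ Hwv HnN) [e' [? ? _]]; exists e'; split => //; apply/eqP.
have S2 : \sum_(e' | mtgt e' == w) derive1 (f (iE e')) (mlen (iE e')) =
          \sum_(e | mtgt e == v) derive1 (f e) (mlen e).
  apply: (@sum_bij R _ _ (fun e' => mtgt e' == w) (fun e => mtgt e == v) iE
     (fun e => derive1 (f e) (mlen e))).
  - by move=> e1 e2 /eqP ? /eqP ?; apply: (tgt_inj _ _ _ _ Hwv HnN).
  - by move=> e' /eqP H; have [_ ->] := tgt_map _ _ _ H Hwv.
  - by move=> e /eqP /(tgt_surj _ _ _ Hwv HnN) [e' [? ? _]]; exists e'; split => //; apply/eqP.
rewrite S1 S2.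
exact: (Hneu v).2.
Qed.


Lemma incident (v : mV G) : graph_connected G -> nonzero_fun f ->
  exists e : mE G, msrc e = v \/ mtgt e = v.
Proof.
move=> Hc [e0 _].
pose inc x := exists e : mE G, msrc e = x \/ mtgt e = x.
have H : forall x y, clos_refl_sym_trans _ (@adj R G) x y ->
    x = y \/ (inc x /\ inc y).
  move=> x y; elim => {x y}.
  - move=> x y [e [<- <-]]; right; split; exists e; tauto.
  - by move=> x; left.
  - move=> x y _ [E|[? ?]]; [left|right] => //.
  - move=> x y z _ [E1|[h1 h2]] _ [E2|[h3 h4]].
    + by left; rewrite E1 E2.
    + by right; rewrite E1.
    + by right; rewrite -E2.
    + by right.
by case: (H _ _ (Hc v (msrc e0))) => [->|[]//]; exists e0; left.
Qed.

Lemma O_edge : graph_connected G -> nonzero_fun f -> exists e' : mE O, True.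
Proof.
move=> Hcn Hnz.
have [c [cv cn] Hc] := Hcomp.
have [p [pv pn pe]] := proj1 (Hc c) (conj cv (conj cn (rst_refl _ _ c))).
case: p pv pn pe => [w|e' x]; last by exists e'.
move=> _ /= pn _.
case: (Hw w) => [[v [Hwv HnN]]|[Hn _]]; last by case: pn.
have [e [He|He]] := incident v Hcn Hnz.
  by have [e' _] := src_surj _ _ _ Hwv HnN He; exists e'.
by have [e' _] := tgt_surj _ _ _ Hwv HnN He; exists e'.
Qed.

Lemma nz_O : graph_connected G -> nonzero_fun f -> nonzero_fun gO.
Proof.
move=> Hcn Hnz; have [e' _] := O_edge Hcn Hnz.
case: (pselect (exists x, 0 <= x <= mlen e' /\ gO e' x != 0)) => [[x hx]|Hn].
  by exists e', x.
exfalso.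
have Z x : 0 <= x <= mlen e' -> f (iE e') (off e' + x) = 0.
  move=> hx; case: (eqVneq (f (iE e') (off e' + x)) 0) => // hnz.
  by case: Hn; exists x.
have [of0 of1] := Hoff e'; have L0 := mlen_pos e'.
set m0 := off e' + mlen e' / 2.
have Hd t : derivable (f (iE e')) t 1 by have [] := Hode (iE e') t.
have D : is_derive m0 1 (f (iE e')) 0.
  apply: (@derive1_at_max R (f (iE e')) (off e') (off e' + mlen e') m0).
  - lra.
  - by move=> t _; apply: Hd.
  - by rewrite in_itv /= /m0; apply/andP; split; lra.
  - move=> t; rewrite in_itv /= => /andP[t1 t2].
    have -> : t = off e' + (t - off e') by rewrite addrC subrK.
    rewrite Z; last by apply/andP; split; lra.
    rewrite /m0 Z //; apply/andP; split; lra.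
have d0 : derive1 (f (iE e')) m0 = 0 by rewrite derive1E; apply: derive_val.
apply: (Hmorse (iE e') m0).
  by rewrite /m0; apply/andP; split; lra.
split => //; have [_ [_ ->]] := Hode (iE e') m0.
rewrite /m0 Z ?mulr0 //; apply/andP; split; lra.
Qed.

Lemma main_sec : graph_connected G -> nonzero_fun f -> eigenfunction k gO.
Proof. move=> Hcn Hnz; split; [exact: ode_O|exact: neu_O|exact: nz_O]. Qed.

End GSide.

Theorem lemma8p1 (R : realType) (G : mgraph R) (k : R) (f : gfun G)
    (O : mgraph R) (iE : mE O -> mE G) (off : mE O -> R) (iV : mV O -> gpoint G) :
  graph_connected G -> standard G -> nontrivial G ->
  0 <= k -> eigenfunction k f -> morse f ->
  neumann_domain f iE off iV ->
  eigenfunction k (fun (e' : mE O) (x : R) => f (iE e') (off e' + x)).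
Proof.
move=> Hcn _ _ _ [Hode Hneu Hnz] Hmorse HND.
exact: (main_sec R G k f Hode Hneu Hmorse O iE off iV HND Hcn Hnz).
Qed.
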